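(* Let $a>0$ satisfy $p(e^a-1) < \frac{q_I}{2}(1-e^{-a})$ and define $\Phi([x_1,\dots,x_I]) = \sum_{i=1}^I e^{a x_i}$. Then there exists $b>0$ such that, for the controlled queue-length vector $X_t = [X^1_t,\dots,X^I_t]$ and $\theta := [0,\dots,0]$, $$\mathbb{E}\left[\Phi(X_{t+1}) - \Phi(X_t)\,\middle|\, X_t\right] \le -b\,\Phi(X_t) \quad \text{whenever } X_t \neq \theta,$$ and this holds regardless of the choice of the admissible controls $\{\nu^i_t\}$.
   Context: Processor sharing model: a single Bernoulli arrival process $\{\xi_t\}$ ($\xi_t\in\{0,1\}$ i.i.d., $P(\xi_t=1)=p\in(0,1)$). There are $I$ queues (servers) with queue lengths $X^i_t\in\{0,1,2,\dots\}$ evolving as $X^i_{t+1} = X^i_t - D^i_{t+1} + \nu^i_t \xi_{t+1}$, where $\nu^i_t\in\{0,1\}$ is a control ($1$ = active: arrivals admitted to queue $i$; $0$ = passive) with $\sum_i \nu^i_t = 1$ for all $t$, and the controls are admissible, i.e. $\nu_t$ is conditionally independent of future departures and arrivals given the past history. Departures follow egalitarian processor sharing: server $i$ has capacity $q_i$; given $X^i_t = x\ge 1$, $D^i_{t+1}\sim \mathrm{Binomial}(x, q_i/x)$, i.e. $P(d \text{ departures}) = \binom{x}{d}(q_i/x)^d(1-q_i/x)^{x-d}$; if $x=0$ there are no departures. Standing assumption: $1>q_1>q_2>\dots>q_I>2p>0$. *)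

(* Defs.v *)
From Stdlib Require Export Reals Arith.
Open Scope R_scope.

Fixpoint fsum (n : nat) (f : nat -> R) : R :=
  match n with
  | O => 0
  | S m => fsum m f + f m
  end.

(* Departure law of a processor-sharing queue with capacity qi holding x
   customers: Binomial(x, qi/x) if x >= 1, no departures if x = 0. *)
Definition dep_pmf (x : nat) (qi : R) (d : nat) : R :=
  match x with
  | O => if Nat.eqb d 0 then 1 else 0
  | S _ => C x d * (qi / INR x) ^ d * (1 - qi / INR x) ^ (x - d)
  end.

Definition arr_pmf (p : R) (e : nat) : R :=
  if Nat.eqb e 0 then 1 - p else p.

(* E[ exp(a X^i_{t+1}) | X^i_t = x, nu^i_t = nu ], with X^i_{t+1} = x - D + nu*xi,
   D ~ dep_pmf x qi independent of xi ~ Bernoulli(p). *)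
Definition exp_next_i (a p qi : R) (x nu : nat) : R :=
  fsum (S x) (fun d => fsum 2 (fun e =>
    dep_pmf x qi d * arr_pmf p e * exp (a * INR (x - d + nu * e)))).

(* Phi(x) = sum_{i<I} exp(a x_i); queues are indexed 0..I-1 (paper's 1..I) *)
Definition Phi (a : R) (I : nat) (x : nat -> nat) : R :=
  fsum I (fun i => exp (a * INR (x i))).

(* control indicator: arrivals routed to queue j, i.e. nu^i = [i = j] *)
Definition ctrl (j i : nat) : nat := if Nat.eqb i j then 1%nat else 0%nat.

(* E[ Phi(X_{t+1}) | X_t = x, control routes arrivals to queue j ] *)
Definition exp_next_Phi (a p : R) (q : nat -> R) (I : nat) (x : nat -> nat) (j : nat) : R :=
  fsum I (fun i => exp_next_i a p (q i) (x i) (ctrl j i)).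

(* Main.v *)
Require Import Defs.
From Stdlib Require Import Reals Lra Lia.
Open Scope R_scope.

Lemma exp_pow_n (x : R) (n : nat) : exp (INR n * x) = exp x ^ n.
Proof.
  induction n as [|n IH].
  - simpl. rewrite Rmult_0_l. apply exp_0.
  - rewrite S_INR. replace ((INR n + 1) * x) with (INR n * x + x) by ring.
    rewrite exp_plus, IH. simpl. ring.
Qed.

Lemma fsum_ext n f g : (forall i, (i < n)%nat -> f i = g i) -> fsum n f = fsum n g.
Proof.
  induction n; intros H; simpl; auto.
  rewrite IHn by (intros; apply H; lia). rewrite H by lia. reflexivity.
Qed.

Lemma fsum_le n f g : (forall i, (i < n)%nat -> f i <= g i) -> fsum n f <= fsum n g.
Proof.
  induction n; intros H; simpl; [lra|].
  assert (fsum n f <= fsum n g) by (apply IHn; intros; apply H; lia).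
  specialize (H n ltac:(lia)). lra.
Qed.

Lemma fsum_plus n f g : fsum n (fun i => f i + g i) = fsum n f + fsum n g.
Proof. induction n; simpl; [ring|rewrite IHn; ring]. Qed.

Lemma fsum_scal n c f : fsum n (fun i => c * f i) = c * fsum n f.
Proof. induction n; simpl; [ring|rewrite IHn; ring]. Qed.

Lemma fsum_minus n f g : fsum n (fun i => f i - g i) = fsum n f - fsum n g.
Proof. induction n; simpl; [ring|rewrite IHn; ring]. Qed.

Lemma fsum_nonneg n f : (forall i, (i < n)%nat -> 0 <= f i) -> 0 <= fsum n f.
Proof.
  induction n; intros H; simpl; [lra|].
  assert (0 <= fsum n f) by (apply IHn; intros; apply H; lia).
  specialize (H n ltac:(lia)). lra.
Qed.

Lemma fsum_single n f j : (forall i, (i < n)%nat -> 0 <= f i) -> (j < n)%nat -> f j <= fsum n f.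
Proof.
  induction n; intros H Hj; [lia|]. simpl.
  destruct (Nat.eq_dec j n) as [->|Hne].
  - assert (0 <= fsum n f) by (apply fsum_nonneg; intros; apply H; lia). lra.
  - assert (f j <= fsum n f) by (apply IHn; [intros; apply H; lia| lia]).
    specialize (H n ltac:(lia)). lra.
Qed.

Lemma fsum_delta n f j : (j < n)%nat ->
  fsum n (fun i => INR (ctrl j i) * f i) = f j.
Proof.
  induction n; intros Hj; [lia|]. simpl. unfold ctrl at 2.
  destruct (Nat.eq_dec j n) as [->|Hne].
  - rewrite Nat.eqb_refl. rewrite (fsum_ext _ _ (fun _ => 0)).
    + assert (fsum n (fun _ => 0) = 0) by (clear; induction n as [|n IH]; simpl; [auto|rewrite IH; ring]).
      rewrite H. simpl. ring.
    + intros i Hi. unfold ctrl. replace (Nat.eqb i n) with false by (symmetry; apply Nat.eqb_neq; lia).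
      simpl; ring.
  - replace (Nat.eqb n j) with false by (symmetry; apply Nat.eqb_neq; lia).
    rewrite IHn by lia. simpl; ring.
Qed.

Lemma fsum_sumf n f : fsum (S n) f = sum_f_R0 f n.
Proof. induction n as [|n IH]. simpl; ring. change (fsum (S n) f + f (S n) = sum_f_R0 f n + f (S n)). rewrite IH; reflexivity. Qed.

Definition Dsum (a qi : R) (x : nat) : R :=
  fsum (S x) (fun d => dep_pmf x qi d * exp (a * INR (x - d))).

Lemma next_i_split a p qi x nu :
  exp_next_i a p qi x nu = (1 - p + p * exp (a * INR nu)) * Dsum a qi x.
Proof.
  unfold exp_next_i, Dsum. rewrite <- fsum_scal. apply fsum_ext. intros d Hd.
  simpl. unfold arr_pmf. simpl.
  rewrite Nat.mul_0_r, Nat.add_0_r, Nat.mul_1_r, plus_INR, Rmult_plus_distr_l, exp_plus.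
  ring.
Qed.

Lemma Dsum0 a qi : Dsum a qi 0 = 1.
Proof. unfold Dsum. simpl. rewrite Rmult_0_r, exp_0. ring. Qed.

Lemma Dsum_bound a qi n : 0 < a -> 0 < qi < 1 ->
  Dsum a qi (S n) <= exp (a * INR (S n) - qi * (1 - exp (- a))).
Proof.
  intros Ha Hq. set (x := S n). unfold Dsum.
  assert (Hx : 1 <= INR x) by (unfold x; rewrite S_INR; pose proof (pos_INR n); lra).
  set (u := qi / INR x).
  assert (Hu : 0 < u < 1).
  { unfold u. split. apply Rdiv_lt_0_compat; lra.
    apply (Rmult_lt_reg_r (INR x)); [lra|]. unfold Rdiv. rewrite Rmult_assoc, Rinv_l by lra. nra. }
  rewrite (fsum_ext _ _ (fun d => C x d * u ^ d * ((1 - u) * exp a) ^ (x - d))).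
  2:{ intros d Hd. unfold dep_pmf, x. fold x. fold u.
      rewrite Rmult_comm with (r1 := a), exp_pow_n, Rpow_mult_distr. ring. }
  rewrite fsum_sumf, <- binomial.
  set (t := u * (1 - exp (- a))).
  assert (Hea : exp a * exp (- a) = 1) by (rewrite <- exp_plus; replace (a + - a) with 0 by ring; apply exp_0).
  assert (Hy : u + (1 - u) * exp a = exp a * (1 - t)).
  { unfold t. replace (exp a * (1 - u * (1 - exp (- a)))) with
       (exp a - u * exp a + u * (exp a * exp (- a))) by ring. rewrite Hea. ring. }
  assert (Hem : exp (- a) < 1) by (rewrite <- exp_0; apply exp_increasing; lra).
  assert (Hemp : 0 < exp (- a)) by apply exp_pos.
  assert (Heap : 0 < exp a) by apply exp_pos.
  assert (Hle : u + (1 - u) * exp a <= exp (a - t)).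
  { rewrite Hy. unfold Rminus at 2. rewrite exp_plus.
    apply Rmult_le_compat_l; [lra|]. pose proof (exp_ineq1_le (- t)). lra. }
  eapply Rle_trans. apply pow_incr. split; [nra|exact Hle].
  rewrite <- exp_pow_n. right. f_equal. unfold t, u.
  field. lra.
Qed.

Lemma exp_mono x y : x <= y -> exp x <= exp y.
Proof. intros [H|H]; [left; apply exp_increasing; auto| right; subst; auto]. Qed.

Definition sx (a : R) (x : nat) : R := if Nat.eqb x 0 then 0 else exp (a * INR x).

Lemma term_bound a p qi Q x nu : 0 < a -> 0 < p < 1 -> 0 < Q <= qi -> qi < 1 -> (nu <= 1)%nat ->
  exp_next_i a p qi x nu - exp (a * INR x) <=
  INR nu * (p * (exp a - 1)) * exp (a * INR x) - (1 - exp (- (Q * (1 - exp (- a))))) * sx a x.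
Proof.
  intros Ha Hp HQ Hq Hnu. rewrite next_i_split. unfold sx.
  assert (Hea : 1 < exp a) by (rewrite <- exp_0; apply exp_increasing; lra).
  assert (Hem : exp (- a) < 1) by (rewrite <- exp_0; apply exp_increasing; lra).
  assert (Hemp : 0 < exp (- a)) by apply exp_pos.
  assert (HA : nu = 0%nat \/ nu = 1%nat) by lia.
  destruct x as [|n].
  - simpl Nat.eqb. rewrite Dsum0. simpl INR. rewrite Rmult_0_r, exp_0.
    destruct HA as [ -> | -> ]; simpl INR; rewrite ?Rmult_0_r, ?Rmult_1_r, ?exp_0. all: idtac.
    all: right; ring.
  - simpl Nat.eqb. pose proof (Dsum_bound a qi n Ha ltac:(lra)) as HD.
    set (E := exp (a * INR (S n))) in *.
    assert (HEp : 0 < E) by apply exp_pos.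
    assert (HD2 : Dsum a qi (S n) <= E * exp (- (Q * (1 - exp (- a))))).
    { eapply Rle_trans; [exact HD|]. unfold E. rewrite <- exp_plus. apply exp_mono.
      assert (Q * (1 - exp (- a)) <= qi * (1 - exp (- a))) by (apply Rmult_le_compat_r; lra). lra. }
    assert (HQc : 0 < Q * (1 - exp (- a))) by (apply Rmult_lt_0_compat; lra).
    assert (Hx1 : exp (- (Q * (1 - exp (- a)))) < 1) by (pose proof (exp_increasing _ _ (Ropp_lt_gt_0_contravar _ HQc)) as Hh; rewrite exp_0 in Hh; exact Hh).
    set (z := exp (- (Q * (1 - exp (- a))))) in *.
    destruct HA as [ -> | -> ]; simpl INR; rewrite ?Rmult_0_r, ?Rmult_1_r, ?exp_0.
    + nra.
    + assert (0 <= p * (exp a - 1)) by nra.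
      assert (0 <= 1 - p + p * exp a) by nra.
      assert ((1 - p + p * exp a) * Dsum a qi (S n) <= (1 - p + p * exp a) * (E * z)) by (apply Rmult_le_compat_l; lra).
      assert (p * (exp a - 1) * E * z <= p * (exp a - 1) * E) by (assert (0 <= p * (exp a - 1) * E) by nra; nra).
      nra.
Qed.

Theorem lemma1 (I : nat) (p a : R) (q : nat -> R)
  (HI : (1 <= I)%nat) (Hp0 : 0 < p) (Hp1 : p < 1)
  (Hq0 : q 0%nat < 1)
  (Hdec : forall i j : nat, (i < j)%nat -> (j < I)%nat -> q j < q i)
  (HqI : 2 * p < q (I - 1)%nat)
  (Ha : 0 < a)
  (Hab : p * (exp a - 1) < q (I - 1)%nat / 2 * (1 - exp (- a))) :
  exists b : R, 0 < b /\
    forall (x : nat -> nat) (w : nat -> R),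
      (exists i : nat, (i < I)%nat /\ x i <> 0%nat) ->
      (forall j : nat, 0 <= w j) ->
      fsum I w = 1 ->
      fsum I (fun j => w j * exp_next_Phi a p q I x j) - Phi a I x
        <= - b * Phi a I x.
Proof.
  set (Q := q (I - 1)%nat) in *.
  set (c := 1 - exp (- a)).
  set (r := p * (exp a - 1)).
  set (eps := 1 - exp (- (Q * c))).
  assert (Hea : 1 < exp a) by (rewrite <- exp_0; apply exp_increasing; lra).
  assert (Hem : exp (- a) < 1) by (rewrite <- exp_0; apply exp_increasing; lra).
  assert (Hemp : 0 < exp (- a)) by apply exp_pos.
  assert (Hc : 0 < c < 1) by (unfold c; lra).
  assert (Hr : 0 < r) by (unfold r; nra).
  assert (HqQ : forall i, (i < I)%nat -> Q <= q i /\ q i < 1).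
  { intros i Hi. split.
    - destruct (Nat.eq_dec i (I - 1)) as [->|Hne]; [unfold Q; lra|].
      left. apply Hdec; lia.
    - destruct i as [|i]; [lra|]. apply Rlt_trans with (q 0%nat); [apply Hdec; lia|lra]. }
  assert (HQ1 : Q < 1) by (apply (HqQ (I - 1)%nat); lia).
  assert (HQ0 : 0 < Q) by lra.
  assert (HQc : 2 * r < Q * c) by (unfold r, c; lra).
  assert (HQc1 : Q * c < 1) by nra.
  assert (Hk : r < eps).
  { unfold eps. rewrite exp_Ropp. pose proof (exp_ineq1_le (Q * c)).
    assert (0 < exp (Q * c)) by apply exp_pos.
    assert (r * exp (Q * c) < exp (Q * c) - 1) by nra.
    apply (Rmult_lt_reg_r (exp (Q * c))); [lra|].
    rewrite Rmult_minus_distr_r, Rinv_l by lra. lra. }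
  assert (HI0 : 0 < INR I + 1) by (pose proof (pos_INR I); lra).
  exists ((eps - r) / (INR I + 1)). split.
  { apply Rdiv_lt_0_compat; lra. }
  intros x w [i0 [Hi0 Hx0]] Hw Hw1.
  set (SS := fsum I (fun i => sx a (x i))).
  assert (Hsx : forall i, 0 <= sx a (x i)).
  { intros i. unfold sx. destruct (Nat.eqb (x i) 0); [lra|left; apply exp_pos]. }
  assert (HS1 : 1 <= SS).
  { eapply Rle_trans; [|apply (fsum_single _ _ i0); auto].
    unfold sx. apply Nat.eqb_neq in Hx0. rewrite Hx0.
    rewrite <- exp_0 at 1. apply exp_mono. pose proof (pos_INR (x i0)). nra. }
  assert (HPhi : Phi a I x <= (INR I + 1) * SS).
  { unfold Phi. apply Rle_trans with (fsum I (fun i => 1 + sx a (x i))).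
    - apply fsum_le. intros i _. unfold sx. destruct (Nat.eqb (x i) 0) eqn:E.
      + apply Nat.eqb_eq in E. rewrite E. simpl. rewrite Rmult_0_r, exp_0. lra.
      + lra.
    - rewrite fsum_plus. fold SS.
      assert (fsum I (fun _ => 1) = INR I) by (clear; induction I as [|n IH]; [reflexivity| change (fsum n (fun _ => 1) + 1 = INR (S n)); rewrite IH, S_INR; reflexivity]).
      rewrite H. pose proof (pos_INR I). nra. }
  assert (Hj : forall j, (j < I)%nat -> exp_next_Phi a p q I x j - Phi a I x <= - (eps - r) * SS).
  { intros j Hj. unfold exp_next_Phi, Phi. rewrite <- fsum_minus.
    apply Rle_trans with (fsum I (fun i => INR (ctrl j i) * (r * exp (a * INR (x i))) - eps * sx a (x i))).
    - apply fsum_le. intros i Hi. destruct (HqQ i Hi).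
      eapply Rle_trans. apply (term_bound a p (q i) Q (x i) (ctrl j i)); try lra.
      unfold ctrl; destruct (Nat.eqb i j); lia.
      right. fold c. fold eps. fold r. ring.
    - rewrite fsum_minus, fsum_delta by auto. rewrite fsum_scal. fold SS.
      assert (exp (a * INR (x j)) <= SS).
      { unfold SS. destruct (Nat.eqb (x j) 0) eqn:E.
        - apply Nat.eqb_eq in E. rewrite E. simpl. rewrite Rmult_0_r, exp_0. exact HS1.
        - apply Rle_trans with (sx a (x j)).
          + unfold sx. rewrite E. lra.
          + apply (fsum_single _ (fun i => sx a (x i))); auto. }
      nra. }
  apply Rle_trans with (fsum I (fun j => w j * (- (eps - r) * SS))).
  - assert (Heq : fsum I (fun j => w j * (exp_next_Phi a p q I x j - Phi a I x)) =
      fsum I (fun j => w j * exp_next_Phi a p q I x j) - Phi a I x * fsum I w).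
    { rewrite <- fsum_scal, <- fsum_minus. apply fsum_ext. intros; ring. }
    rewrite Hw1, Rmult_1_r in Heq. rewrite <- Heq. apply fsum_le. intros j Hjl.
    specialize (Hj j Hjl). specialize (Hw j).
    apply Rmult_le_compat_l; auto.
  - rewrite (fsum_ext _ _ (fun j => (- (eps - r) * SS) * w j)) by (intros; ring).
    rewrite fsum_scal, Hw1, Rmult_1_r.
    assert (Hb : (eps - r) / (INR I + 1) * Phi a I x <= (eps - r) * SS).
    { unfold Rdiv. rewrite Rmult_assoc. apply Rmult_le_compat_l; [lra|].
      apply (Rmult_le_reg_l (INR I + 1)); [lra|].
      rewrite <- Rmult_assoc, Rinv_r by lra. lra. }
    lra.
Qed.
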